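(* Let $E$ be a Banach lattice and let $(u_n^* )_{n\ge1}$ be a finitely disjoint sequence in $(E^* )^+$. If there exist $u_0\in E^+$ and $\delta>0$ such that $\langle u_0,u_n^*\rangle\ge\delta$ for all $n$, then there exist a subsequence $(u^*_{n_k})_{k\ge1}$, a disjoint sequence $(v_k)_{k\ge1}$ in $[0,u_0]$ and $\varepsilon>0$ such that $\langle v_k,u^*_{n_k}\rangle\ge\varepsilon$ for all $k\in\mathbb N$.
   Context: A sequence $(x_n)$ in a Banach lattice is called finitely disjoint if for every $N\in\mathbb N$ there exist indices $i_1<i_2<\dots<i_N$ such that $x_{i_1},\dots,x_{i_N}$ are mutually disjoint. *)

(* Defs.v *)
From Stdlib Require Import Reals.
Open Scope R_scope.

Record BanachLattice := {
  car :> Type;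
  zero : car;
  add : car -> car -> car;
  opp : car -> car;
  scal : R -> car -> car;
  le : car -> car -> Prop;
  join : car -> car -> car;
  meet : car -> car -> car;
  norm : car -> R;
  add_assoc : forall x y z, add x (add y z) = add (add x y) z;
  add_comm : forall x y, add x y = add y x;
  add_zero : forall x, add x zero = x;
  add_opp : forall x, add x (opp x) = zero;
  scal_assoc : forall a b x, scal a (scal b x) = scal (a * b) x;
  scal_one : forall x, scal 1 x = x;
  scal_distr_l : forall a x y, scal a (add x y) = add (scal a x) (scal a y);
  scal_distr_r : forall a b x, scal (a + b) x = add (scal a x) (scal b x);
  le_refl : forall x, le x x;
  le_antisym : forall x y, le x y -> le y x -> x = y;
  le_trans : forall x y z, le x y -> le y z -> le x z;
  le_add : forall x y z, le x y -> le (add x z) (add y z);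
  le_scal : forall a x y, 0 <= a -> le x y -> le (scal a x) (scal a y);
  join_ub_l : forall x y, le x (join x y);
  join_ub_r : forall x y, le y (join x y);
  join_least : forall x y z, le x z -> le y z -> le (join x y) z;
  meet_lb_l : forall x y, le (meet x y) x;
  meet_lb_r : forall x y, le (meet x y) y;
  meet_greatest : forall x y z, le z x -> le z y -> le z (meet x y);
  norm_nonneg : forall x, 0 <= norm x;
  norm_eq0 : forall x, norm x = 0 -> x = zero;
  norm_scal : forall a x, norm (scal a x) = Rabs a * norm x;
  norm_triangle : forall x y, norm (add x y) <= norm x + norm y;
  (* lattice norm: |x| <= |y| implies ||x|| <= ||y|| *)
  norm_lattice : forall x y,
    le (join x (opp x)) (join y (opp y)) -> norm x <= norm y;
  complete : forall s : nat -> car,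
    (forall eps, eps > 0 -> exists N, forall n m, (n >= N)%nat -> (m >= N)%nat ->
        norm (add (s n) (opp (s m))) < eps) ->
    exists l, forall eps, eps > 0 -> exists N, forall n, (n >= N)%nat ->
        norm (add (s n) (opp l)) < eps
}.

Arguments zero {_}.
Arguments add {_}.
Arguments opp {_}.
Arguments scal {_}.
Arguments le {_}.
Arguments join {_}.
Arguments meet {_}.
Arguments norm {_}.

Section Defs.
Variable E : BanachLattice.

Definition sub (x y : E) : E := add x (opp y).

Definition absE (x : E) : E := join x (opp x).

Definition disjointE (x y : E) : Prop := meet (absE x) (absE y) = zero.

(* elements of the dual E^star: bounded (= norm continuous) linear functionals *)
Definition is_dual (f : E -> R) : Prop :=
  (forall x y, f (add x y) = f x + f y) /\
  (forall a x, f (scal a x) = a * f x) /\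
  (exists C, forall x, Rabs (f x) <= C * norm x).

Definition is_dual_pos (f : E -> R) : Prop :=
  is_dual f /\ forall x, le zero x -> 0 <= f x.

(* Disjointness of two positive functionals f, g in the Banach lattice E^star:
   f /\ g = 0, where (Riesz-Kantorovich) for x >= 0
   (f /\ g)(x) = inf { f y + g (x - y) : 0 <= y <= x }.
   Since this infimum is >= 0 for positive f, g, f /\ g = 0 means that the
   infimum is 0 for every x >= 0. *)
Definition disjoint_dual_pos (f g : E -> R) : Prop :=
  forall x, le zero x -> forall eps, eps > 0 ->
    exists y, le zero y /\ le y x /\ f y + g (sub x y) < eps.

Definition finitely_disjoint_dual_pos (u : nat -> E -> R) : Prop :=
  forall N : nat, exists i : nat -> nat,
    (forall j k, (j < k)%nat -> (k < N)%nat -> (i j < i k)%nat) /\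
    (forall j k, (j < k)%nat -> (k < N)%nat -> disjoint_dual_pos (u (i j)) (u (i k))).

End Defs.

Arguments sub {_}.
Arguments absE {_}.
Arguments disjointE {_}.
Arguments is_dual {_}.
Arguments is_dual_pos {_}.
Arguments disjoint_dual_pos {_}.
Arguments finitely_disjoint_dual_pos {_}.

(* Main.v *)
Require Import Defs.
From Stdlib Require Import Reals Lra Lia List Classical ClassicalEpsilon.
Open Scope R_scope.

Section Lat.
Variable E : BanachLattice.
Implicit Types x y z a b c w : E.

Lemma addA x y z : add x (add y z) = add (add x y) z. Proof. apply add_assoc. Qed.
Lemma addC x y : add x y = add y x. Proof. apply add_comm. Qed.
Lemma add0 x : add x zero = x. Proof. apply add_zero. Qed.
Lemma addN x : add x (opp x) = zero. Proof. apply add_opp. Qed.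
Lemma add0l x : add zero x = x. Proof. rewrite addC; apply add0. Qed.
Lemma addNl x : add (opp x) x = zero. Proof. rewrite addC; apply addN. Qed.
Lemma addKl z x : add (opp z) (add z x) = x.
Proof. rewrite addA, addNl; apply add0l. Qed.
Lemma addKl' z x : add z (add (opp z) x) = x.
Proof. rewrite addA, addN; apply add0l. Qed.
Lemma add_inj z x y : add z x = add z y -> x = y.
Proof. intro H. rewrite <- (addKl z x), <- (addKl z y), H. reflexivity. Qed.
Lemma oppK x : opp (opp x) = x.
Proof. apply (add_inj (opp x)). rewrite addN, addNl. reflexivity. Qed.
Lemma opp0 : opp (zero : E) = zero.
Proof. apply (add_inj zero). rewrite addN, add0. reflexivity. Qed.
Lemma oppD x y : opp (add x y) = add (opp x) (opp y).
Proof.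
  apply (add_inj (add x y)). rewrite addN. symmetry.
  rewrite (addC (opp x)), addA, <- (addA x y), addN, add0, addN. reflexivity.
Qed.
Lemma addBK x y : add (add x y) (opp x) = y.
Proof. rewrite (addC x y), <- addA, addN, add0. reflexivity. Qed.
Lemma addBK' x y : add (add x y) (opp y) = x.
Proof. rewrite <- addA, addN, add0. reflexivity. Qed.

Lemma le_addl z x y : le x y -> le (add z x) (add z y).
Proof. intro H. rewrite (addC z x), (addC z y). apply le_add; auto. Qed.
Lemma le_add2 x y x' y' : le x y -> le x' y' -> le (add x x') (add y y').
Proof.
  intros H1 H2. apply le_trans with (add y x'). apply le_add; auto. apply le_addl; auto.
Qed.
Lemma le_opp x y : le x y -> le (opp y) (opp x).
Proof.
  intro H. pose proof (le_addl (add (opp x) (opp y)) x y H) as H'.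
  rewrite (addC _ x), addKl' in H'.
  rewrite (addC (opp x) (opp y)), (addC _ y), addKl' in H'. exact H'.
Qed.
Lemma le0_sub x y : le x y -> le zero (add y (opp x)).
Proof. intro H. rewrite <- (addN x). apply le_add; auto. Qed.
Lemma sub_le0 x y : le zero (add y (opp x)) -> le x y.
Proof.
  intro H. pose proof (le_add _ _ _ x H) as H'. rewrite add0l, <- addA, addNl, add0 in H'. exact H'.
Qed.
Lemma le_opp0 x : le zero x -> le (opp x) zero.
Proof. intro H. rewrite <- opp0. apply le_opp; auto. Qed.

Lemma join_comm x y : join x y = join y x.
Proof. apply le_antisym; apply join_least; auto using join_ub_l, join_ub_r. Qed.
Lemma meet_comm x y : meet x y = meet y x.
Proof. apply le_antisym; apply meet_greatest; auto using meet_lb_l, meet_lb_r. Qed.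

Lemma joinT z x y : add z (join x y) = join (add z x) (add z y).
Proof.
  apply le_antisym.
  - set (J := join (add z x) (add z y)).
    assert (H : le (join x y) (add (opp z) J)).
    { apply join_least.
      + rewrite <- (addKl z x). apply le_addl. apply join_ub_l.
      + rewrite <- (addKl z y). apply le_addl. apply join_ub_r. }
    pose proof (le_addl z _ _ H) as H'. rewrite addKl' in H'. exact H'.
  - apply join_least; apply le_addl; auto using join_ub_l, join_ub_r.
Qed.
Lemma meetT z x y : add z (meet x y) = meet (add z x) (add z y).
Proof.
  apply le_antisym.
  - apply meet_greatest; apply le_addl; auto using meet_lb_l, meet_lb_r.
  - set (J := meet (add z x) (add z y)).
    assert (H : le (add (opp z) J) (meet x y)).
    { apply meet_greatest.
      + rewrite <- (addKl z x). apply le_addl. apply meet_lb_l.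
      + rewrite <- (addKl z y). apply le_addl. apply meet_lb_r. }
    pose proof (le_addl z _ _ H) as H'. rewrite addKl' in H'. exact H'.
Qed.
Lemma oppJ x y : opp (join x y) = meet (opp x) (opp y).
Proof.
  apply le_antisym.
  - apply meet_greatest; apply le_opp; auto using join_ub_l, join_ub_r.
  - rewrite <- (oppK (meet (opp x) (opp y))). apply le_opp.
    apply join_least.
    + rewrite <- (oppK x) at 1. apply le_opp. apply meet_lb_l.
    + rewrite <- (oppK y) at 1. apply le_opp. apply meet_lb_r.
Qed.
Lemma oppM x y : opp (meet x y) = join (opp x) (opp y).
Proof.
  rewrite <- (oppK (join (opp x) (opp y))), oppJ, !oppK. reflexivity.
Qed.
Lemma riesz x y : add (join x y) (meet x y) = add x y.
Proof.
  assert (H : meet x y = add (add x y) (opp (join x y))).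
  { rewrite oppJ, meetT, addBK, addBK', meet_comm. reflexivity. }
  rewrite H, (addC (add x y)), addKl'. reflexivity.
Qed.
Lemma meet_mono a a' b b' : le a a' -> le b b' -> le (meet a b) (meet a' b').
Proof.
  intros. apply meet_greatest.
  apply le_trans with a; auto using meet_lb_l.
  apply le_trans with b; auto using meet_lb_r.
Qed.
Lemma meet_ge0 a b : le zero a -> le zero b -> le zero (meet a b).
Proof. intros; apply meet_greatest; auto. Qed.
Lemma sub_meet a b c : le zero a -> le zero b -> le zero c ->
  le (meet (add a b) c) (add (meet a c) (meet b c)).
Proof.
  intros Ha Hb Hc. set (d := meet (add a b) c).
  assert (Hcl : le (add d (opp (meet a c))) (meet b c)).
  { apply meet_greatest.
    - rewrite oppM, joinT. apply join_least.
      + rewrite <- (addBK a b). apply le_add. apply meet_lb_l.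
      + apply le_trans with zero; auto. rewrite <- (addN c). apply le_add. apply meet_lb_r.
    - apply le_trans with d. 2: apply meet_lb_r.
      rewrite <- (add0 d) at 2. apply le_addl. apply le_opp0. apply meet_ge0; auto. }
  pose proof (le_addl (meet a c) _ _ Hcl) as H'.
  rewrite (addC d), addKl' in H'. exact H'.
Qed.
Lemma posneg z : meet (join z zero) (join (opp z) zero) = zero.
Proof.
  set (n := join (opp z) zero).
  assert (Hp : join z zero = add n z).
  { rewrite addC. unfold n. rewrite joinT, addN, add0, join_comm. reflexivity. }
  assert (Hz : meet z zero = opp n).
  { unfold n. rewrite oppJ, oppK, opp0. reflexivity. }
  rewrite Hp. rewrite <- (add0 n) at 2. rewrite <- meetT, Hz, addN. reflexivity.
Qed.
Lemma absE_pos (v : E) : le zero v -> absE v = v.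
Proof.
  intro H. unfold absE. apply le_antisym.
  - apply join_least. apply le_refl. apply le_trans with zero; auto. apply le_opp0; auto.
  - apply join_ub_l.
Qed.
Lemma disj_below a a' b b' : le zero a -> le a a' -> le zero b -> le b b' ->
  meet a' b' = zero -> meet a b = zero.
Proof.
  intros. apply le_antisym. rewrite <- H3. apply meet_mono; auto. apply meet_ge0; auto.
Qed.
Lemma sum_disj a b w : le zero a -> le zero b -> le a w -> le b w -> meet a b = zero ->
  le (add a b) w.
Proof. intros. rewrite <- riesz, H3, add0. apply join_least; auto. Qed.

Section Fun.
Variable f : E -> R.
Hypothesis fadd : forall x y, f (add x y) = f x + f y.
Hypothesis fpos : forall x, le zero x -> 0 <= f x.
Lemma f0 : f zero = 0.
Proof. pose proof (fadd zero zero). rewrite add0 in H. lra. Qed.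
Lemma fopp x : f (opp x) = - f x.
Proof. pose proof (fadd x (opp x)). rewrite addN, f0 in H. lra. Qed.
Lemma fmono x y : le x y -> f x <= f y.
Proof. intro H. pose proof (fpos _ (le0_sub _ _ H)). rewrite fadd, fopp in H0. lra. Qed.
Lemma fmeet a b w : le a w -> le b w -> f (meet a b) >= f a + f b - f w.
Proof.
  intros. pose proof (riesz a b). apply (f_equal f) in H1. rewrite !fadd in H1.
  assert (f (join a b) <= f w) by (apply fmono; apply join_least; auto). lra.
Qed.
End Fun.

Definition Fadd (f : E -> R) := forall x y, f (add x y) = f x + f y.
Definition Fpos (f : E -> R) := forall x, le zero x -> 0 <= f x.

Lemma split_elem x y : le zero y -> le y x ->
  let z := add x (opp (add y y)) in
  le zero (join z zero) /\ le (join z zero) x /\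
  le zero (join (opp z) zero) /\ le (join (opp z) zero) x /\
  meet (join z zero) (join (opp z) zero) = zero /\
  (forall f, Fadd f -> Fpos f ->
     f (join z zero) >= f x - 2 * f y /\ f (join (opp z) zero) >= 2 * f y - f x).
Proof.
  intros H0 H1 z.
  assert (Hyy : le zero (add y y)) by (rewrite <- (add0 zero); apply le_add2; auto).
  assert (Hx : le zero x) by (apply le_trans with y; auto).
  split; [apply join_ub_r|]. split.
  { apply join_least; auto. unfold z. rewrite <- (add0 x) at 2. apply le_addl, le_opp0; auto. }
  split; [apply join_ub_r|]. split.
  { apply join_least; auto. unfold z. rewrite oppD, oppK.
    apply le_trans with (add (opp x) (add x x)).
    apply le_addl. apply le_add2; auto. rewrite addKl. apply le_refl. }
  split; [apply posneg|].
  intros f Ha Hp. split.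
  - apply Rle_ge. apply Rle_trans with (f z). 2: apply (fmono f Ha Hp), join_ub_l.
    unfold z. rewrite Ha, (fopp f Ha), Ha. lra.
  - apply Rle_ge. apply Rle_trans with (f (opp z)). 2: apply (fmono f Ha Hp), join_ub_l.
    rewrite (fopp f Ha). unfold z. rewrite Ha, (fopp f Ha), Ha. lra.
Qed.

Lemma pair_split f h x eps : Fadd f -> Fpos f -> Fadd h -> Fpos h ->
  disjoint_dual_pos f h -> le zero x -> eps > 0 ->
  exists a b, le zero a /\ le a x /\ le zero b /\ le b x /\ meet a b = zero /\
    f a >= f x - eps /\ h b >= h x - eps.
Proof.
  intros Fa Fp Ha Hp HD Hx He.
  destruct (HD x Hx (eps/2)) as [y [Hy0 [Hyx Hlt]]]. lra.
  destruct (split_elem x y Hy0 Hyx) as [A1 [A2 [A3 [A4 [A5 A6]]]]].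
  eexists; eexists; repeat split; [exact A1|exact A2|exact A3|exact A4|exact A5| |].
  - destruct (A6 f Fa Fp) as [B1 _].
    assert (0 <= h (sub x y)) by (apply Hp; apply le0_sub; auto). lra.
  - destruct (A6 h Ha Hp) as [_ B2].
    assert (0 <= f y) by (apply Fp; auto).
    unfold sub in Hlt. rewrite Ha, (fopp h Ha) in Hlt. lra.
Qed.

Section G.
Variable g : nat -> E -> R.
Hypothesis Hga : forall m, Fadd (g m).
Hypothesis Hgp : forall m, Fpos (g m).
Definition Dg i j := disjoint_dual_pos (g i) (g j).

Lemma inner w eps h t : le zero w -> eps > 0 -> (forall j, In j t -> Dg h j) ->
  exists a (b : nat -> E), le zero a /\ le a w /\ g h a >= g h w - INR (length t) * eps /\
   forall j, In j t -> le zero (b j) /\ le (b j) w /\ g j (b j) >= g j w - eps /\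
     meet a (b j) = zero.
Proof.
  intros Hw He. induction t as [|j t IH]; intro HD.
  - exists w, (fun _ => w). simpl. split; [auto|]. split; [apply le_refl|]. split; [lra|]. intros k [].
  - destruct IH as [a [b [Ha0 [Haw [Hga' Hb]]]]]. intros; apply HD; simpl; auto.
    destruct (pair_split (g h) (g j) w eps (Hga h) (Hgp h) (Hga j) (Hgp j))
      as [a' [b' [A1 [A2 [A3 [A4 [A5 [A6 A7]]]]]]]]; auto.
    apply HD; simpl; auto.
    exists (meet a a'), (fun k => if Nat.eq_dec k j then b' else b k).
    split; [apply meet_ge0; auto|]. split; [apply le_trans with a; auto; apply meet_lb_l|].
    split.
    + pose proof (fmeet (g h) (Hga h) (Hgp h) a a' w Haw A2).
      simpl length. rewrite S_INR. lra.
    + intros k Hk. destruct (Nat.eq_dec k j) as [->|Hne].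
      * repeat split; auto. apply (disj_below _ a' _ b'); auto using meet_ge0, meet_lb_r, le_refl.
      * destruct Hk as [Hk|Hk]; [congruence|]. destruct (Hb k Hk) as [B1 [B2 [B3 B4]]].
        repeat split; auto.
        apply (disj_below _ a _ (b k)); auto using meet_ge0, meet_lb_l, le_refl.
Qed.

Lemma outer w eps s : le zero w -> eps > 0 -> NoDup s -> ForallOrdPairs Dg s ->
  exists q : nat -> E,
   (forall i, In i s -> le zero (q i) /\ le (q i) w /\ g i (q i) >= g i w - INR (length s) * eps) /\
   (forall i j, In i s -> In j s -> i <> j -> meet (q i) (q j) = zero).
Proof.
  intros Hw He. induction s as [|h t IH]; intros Hnd Hfo.
  - exists (fun _ => w). split; intros i; simpl; tauto.
  - inversion Hnd as [|? ? Hnin Hnd']; subst.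
    inversion Hfo as [|? ? Hfa Hfo']; subst.
    destruct (IH Hnd' Hfo') as [q [Hq1 Hq2]].
    destruct (inner w eps h t Hw He) as [a [b [Ha0 [Haw [Hha Hb]]]]].
    { intros j Hj. rewrite Forall_forall in Hfa. auto. }
    exists (fun k => if Nat.eq_dec k h then a else meet (q k) (b k)).
    split.
    + intros i Hi. simpl length. rewrite S_INR. destruct (Nat.eq_dec i h) as [->|Hne].
      * repeat split; auto. pose proof (pos_INR (length t)). nra.
      * destruct Hi as [Hi|Hi]; [congruence|].
        destruct (Hq1 i Hi) as [Q1 [Q2 Q3]]. destruct (Hb i Hi) as [B1 [B2 [B3 B4]]].
        repeat split; auto using meet_ge0.
        apply le_trans with (q i); auto using meet_lb_l.
        pose proof (fmeet (g i) (Hga i) (Hgp i) _ _ w Q2 B2). lra.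
    + intros i j Hi Hj Hij.
      destruct (Nat.eq_dec i h) as [->|Hi']; destruct (Nat.eq_dec j h) as [->|Hj'].
      * congruence.
      * destruct Hj as [Hj|Hj]; [congruence|].
        destruct (Hq1 j Hj) as [Q1 _]. destruct (Hb j Hj) as [B1 [_ [_ B4]]].
        apply (disj_below _ a _ (b j)); auto using meet_ge0, meet_lb_r, le_refl.
      * destruct Hi as [Hi|Hi]; [congruence|].
        destruct (Hq1 i Hi) as [Q1 _]. destruct (Hb i Hi) as [B1 [_ [_ B4]]].
        rewrite meet_comm.
        apply (disj_below _ a _ (b i)); auto using meet_ge0, meet_lb_r, le_refl.
      * destruct Hi as [Hi|Hi]; [congruence|]. destruct Hj as [Hj|Hj]; [congruence|].
        destruct (Hq1 i Hi) as [Q1 _]. destruct (Hq1 j Hj) as [Q1' _].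
        destruct (Hb i Hi) as [B1 _]. destruct (Hb j Hj) as [B1' _].
        apply (disj_below _ (q i) _ (q j)); auto using meet_ge0, meet_lb_l.
Qed.

Fixpoint sumE (q : nat -> E) (s : list nat) : E :=
  match s with nil => zero | i :: t => add (q i) (sumE q t) end.

Lemma meet_sum (q : nat -> E) c s : le zero c -> (forall i, In i s -> le zero (q i)) ->
  (forall i, In i s -> meet c (q i) = zero) -> meet c (sumE q s) = zero.
Proof.
  intros Hc. induction s as [|i t IH]; intros Hp Hm; simpl.
  - apply le_antisym. apply meet_lb_r. apply meet_ge0; auto. apply le_refl.
  - assert (Hs : le zero (sumE q t)).
    { clear IH Hm. induction t as [|j t IHt]; simpl. apply le_refl.
      rewrite <- (add0 zero). apply le_add2. apply Hp; simpl; auto.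
      apply IHt. intros k Hk; apply Hp; simpl in *; tauto. }
    apply le_antisym.
    + rewrite meet_comm. eapply le_trans. apply sub_meet; auto. apply Hp; simpl; auto.
      rewrite meet_comm, Hm, (meet_comm (sumE q t)), IH, add0. apply le_refl.
      intros; apply Hp; simpl; auto. intros; apply Hm; simpl; auto. simpl; auto.
    + apply meet_ge0; auto. rewrite <- (add0 zero). apply le_add2; auto. apply Hp; simpl; auto.
Qed.

Lemma sum_le (q : nat -> E) w s : NoDup s -> (forall i, In i s -> le zero (q i) /\ le (q i) w) ->
  (forall i j, In i s -> In j s -> i <> j -> meet (q i) (q j) = zero) ->
  le zero w -> le zero (sumE q s) /\ le (sumE q s) w.
Proof.
  intros Hnd Hq Hd Hw. induction s as [|h t IH]; simpl.
  - split; auto using le_refl.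
  - inversion Hnd as [|? ? Hnin Hnd']; subst.
    destruct IH as [S0 Sw]; auto.
    intros; apply Hq; simpl; auto. intros; apply Hd; simpl; auto.
    destruct (Hq h) as [H0 Hhw]; simpl; auto.
    split. rewrite <- (add0 zero). apply le_add2; auto.
    apply sum_disj; auto. apply meet_sum; auto. intros; apply Hq; simpl; auto.
    intros i Hi. apply Hd; simpl; auto. intro; subst; auto.
Qed.

Lemma g_sum m (q : nat -> E) s :
  g m (sumE q s) = fold_right Rplus 0 (map (fun i => g m (q i)) s).
Proof.
  induction s; simpl. apply (f0 _ (Hga m)). rewrite Hga, IHs. reflexivity.
Qed.

End G.
End Lat.

Lemma sum_lb (f : nat -> R) s t : (forall i, In i s -> f i >= t) ->
  fold_right Rplus 0 (map f s) >= INR (length s) * t.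
Proof.
  induction s; intros H; cbn [length map fold_right]. simpl; lra. rewrite S_INR.
  assert (f a >= t) by (apply H; simpl; auto).
  assert (fold_right Rplus 0 (map f s) >= INR (length s) * t) by (apply IHs; intros; apply H; simpl; auto).
  lra.
Qed.

Definition fd (D : nat -> nat -> Prop) (P : nat -> Prop) :=
  forall K, exists l, (K <= length l)%nat /\ NoDup l /\ Forall P l /\ ForallOrdPairs D l.

Lemma fd_mono D (P Q : nat -> Prop) : (forall m, P m -> Q m) -> fd D P -> fd D Q.
Proof.
  intros H F K. destruct (F K) as [l [A [B [C C']]]]. exists l. repeat split; auto.
  eapply Forall_impl; eauto.
Qed.

Lemma FOP_filter D f (l : list nat) : ForallOrdPairs D l -> ForallOrdPairs D (filter f l).
Proof.
  induction l as [|a l IH]; intro H; simpl. constructor.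
  inversion H; subst. destruct (f a).
  - constructor; auto. rewrite Forall_forall in *. intros x Hx. apply filter_In in Hx. apply H2; tauto.
  - auto.
Qed.

Lemma Forall_filter' (P : nat -> Prop) f l : Forall P l -> Forall P (filter f l).
Proof. rewrite !Forall_forall. intros H x Hx. apply filter_In in Hx. apply H; tauto. Qed.

Lemma filter_len (f : nat -> bool) l :
  (length (filter f l) + length (filter (fun x => negb (f x)) l))%nat = length l.
Proof. induction l; simpl; auto. destruct (f a); simpl; lia. Qed.

Definition decb (A : nat -> Prop) m : bool :=
  if excluded_middle_informative (A m) then true else false.

Lemma two_piece D P (A : nat -> Prop) : fd D P ->
  fd D (fun m => P m /\ A m) \/ fd D (fun m => P m /\ ~ A m).
Proof.
  intro F. destruct (classic (fd D (fun m => P m /\ A m))) as [H|H]; [left; auto|right].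
  unfold fd in H. apply not_all_ex_not in H. destruct H as [Ka HKa].
  intro K. destruct (F (Ka + K)%nat) as [l [L1 [L2 [L3 L4]]]].
  pose proof (filter_len (decb A) l) as HL.
  destruct (Nat.le_gt_cases Ka (length (filter (decb A) l))) as [Hle|Hgt].
  - exfalso. apply HKa. exists (filter (decb A) l). repeat split; auto.
    apply NoDup_filter; auto.
    rewrite Forall_forall in *. intros x Hx. apply filter_In in Hx. destruct Hx as [Hx Hd].
    split; auto. unfold decb in Hd. destruct (excluded_middle_informative (A x)); auto; discriminate.
    apply FOP_filter; auto.
  - exists (filter (fun x => negb (decb A x)) l). repeat split; [lia| | |].
    apply NoDup_filter; auto.
    rewrite Forall_forall in *. intros x Hx. apply filter_In in Hx. destruct Hx as [Hx Hd].
    split; auto. unfold decb in Hd. destruct (excluded_middle_informative (A x)); auto; discriminate.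
    apply FOP_filter; auto.
Qed.

Lemma fd_gt D P b : fd D P -> fd D (fun m => P m /\ (b < m)%nat).
Proof.
  intro F. destruct (two_piece D P (fun m => (b < m)%nat) F) as [H|H]; auto.
  exfalso. destruct (H (S (S b))) as [l [L1 [L2 [L3 _]]]].
  assert (incl l (seq 0 (S b))).
  { intros x Hx. rewrite Forall_forall in L3. apply L3 in Hx. apply in_seq. lia. }
  pose proof (NoDup_incl_length L2 H0). rewrite length_seq in H1. lia.
Qed.

Lemma PR D (l : list nat) (Q : nat -> nat -> Prop) P : fd D P ->
  (forall m, P m -> exists i, In i l /\ Q i m) -> exists i, In i l /\ fd D (fun m => P m /\ Q i m).
Proof.
  revert P. induction l as [|i t IH]; intros P F H.
  - exfalso. destruct (F 1%nat) as [l [L1 [_ [L3 _]]]]. destruct l; simpl in L1; [lia|].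
    inversion L3; subst. destruct (H n H2) as [i [[] _]].
  - destruct (two_piece D P (Q i) F) as [H1|H1]. exists i; simpl; auto.
    destruct (IH _ H1) as [j [Hj Fj]].
    + intros m [Pm Nm]. destruct (H m Pm) as [k [[->|Hk] Qk]]; [tauto|eauto].
    + exists j. split; simpl; auto. eapply fd_mono; [|exact Fj]. simpl; tauto.
Qed.

Lemma FOP_map_seq (R : nat -> nat -> Prop) (f : nat -> nat) a n :
  (forall j k, (a <= j)%nat -> (j < k)%nat -> (k < a + n)%nat -> R (f j) (f k)) ->
  ForallOrdPairs R (map f (seq a n)).
Proof.
  revert a. induction n; intros a H; simpl. constructor.
  constructor.
  - rewrite Forall_forall. intros x Hx. apply in_map_iff in Hx. destruct Hx as [k [<- Hk]].
    apply in_seq in Hk. apply H; lia.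
  - apply IHn. intros; apply H; lia.
Qed.

Lemma FOP_nodup (l : list nat) : ForallOrdPairs (fun x y => x <> y) l -> NoDup l.
Proof.
  induction l; intro H; constructor; inversion H; subst; auto.
  rewrite Forall_forall in H2. intro Ha. apply (H2 a Ha). reflexivity.
Qed.


Section Step.
Variable E : BanachLattice.
Variable g : nat -> E -> R.
Hypothesis Hga : forall m, Fadd E (g m).
Hypothesis Hgp : forall m, Fpos E (g m).
Variable u0 : E.
Hypothesis Hu0 : forall m, g m u0 = 1.

Lemma step (w : E) P c eta b : 0 < eta -> le zero w -> le w u0 -> fd (Dg E g) P ->
  (forall m, P m -> g m w >= c) ->
  exists n (v w' : E) P', P n /\ (b < n)%nat /\ le zero v /\ le v w /\ le zero w' /\ le w' w /\
    meet v w' = zero /\ g n v >= c - eta /\ fd (Dg E g) P' /\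
    (forall m, P' m -> g m w' >= c - eta).
Proof.
  intros Heta Hw Hwu F Hc.
  destruct (INR_unbounded (2 / eta)) as [N HN].
  destruct (fd_gt _ P b F N) as [l [L1 [L2 [L3 L4]]]].
  set (eps := eta / (2 * (INR (length l) + 1))).
  assert (Hl0 : 0 <= INR (length l)) by apply pos_INR.
  assert (Heps : eps > 0) by (unfold eps; apply Rdiv_lt_0_compat; lra).
  assert (Hloss : INR (length l) * eps <= eta / 2).
  { unfold eps. apply Rmult_le_reg_r with (2 * (INR (length l) + 1)). lra.
    field_simplify; [|lra]. nra. }
  destruct (outer E g Hga Hgp w eps l Hw Heps L2 L4) as [q [Q1 Q2]].
  destruct (sum_le E q w l L2 (fun i Hi => let '(conj a (conj b _)) := Q1 i Hi in conj a b) Q2 Hw)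
    as [S0 Sw].
  assert (Hcol : forall m, P m -> exists i, In i l /\ g m (q i) <= eta / 2).
  { intros m Pm. apply NNPP. intro Hn.
    assert (Hall : forall i, In i l -> g m (q i) >= eta / 2).
    { intros i Hi. apply Rnot_lt_ge. intro Hlt. apply Hn. exists i. split; auto. lra. }
    pose proof (sum_lb (fun i => g m (q i)) l (eta/2) Hall) as Hs.
    rewrite <- (g_sum E g Hga) in Hs.
    assert (g m (sumE E q l) <= g m u0).
    { apply (fmono E (g m) (Hga m) (Hgp m)). apply le_trans with w; auto. }
    rewrite Hu0 in H.
    assert (INR N <= INR (length l)) by (apply le_INR; auto).
    assert (INR N * (eta / 2) > 1).
    { unfold Rdiv in HN. apply Rmult_gt_compat_r with (r := eta/2) in HN; [|lra].
      replace (2 * / eta * (eta / 2)) with 1 in HN by (field; lra). lra. }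
    nra. }
  destruct (PR _ l (fun i m => g m (q i) <= eta / 2) P F Hcol) as [i [Hi Fi]].
  rewrite Forall_forall in L3. destruct (L3 i Hi) as [Pi Hbi].
  destruct (Q1 i Hi) as [Qi0 [Qiw Qig]].
  destruct (split_elem E w (q i) Qi0 Qiw) as [A1 [A2 [A3 [A4 [A5 A6]]]]].
  set (z := add w (opp (add (q i) (q i)))) in *.
  exists i, (join (opp z) zero), (join z zero), (fun m => P m /\ g m (q i) <= eta / 2).
  repeat split; auto.
  - rewrite meet_comm. exact A5.
  - destruct (A6 (g i) (Hga i) (Hgp i)) as [_ B]. specialize (Hc i Pi). lra.
  - intros m [Pm Gm]. destruct (A6 (g m) (Hga m) (Hgp m)) as [B _]. specialize (Hc m Pm). lra.
Qed.
End Step.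


Section Rec.
Variable E : BanachLattice.
Variable g : nat -> E -> R.
Hypothesis Hga : forall m, Fadd E (g m).
Hypothesis Hgp : forall m, Fpos E (g m).
Variable u0 : E.
Hypothesis Hu0 : forall m, g m u0 = 1.
Hypothesis hu0 : le zero u0.
Hypothesis Ffd : fd (Dg E g) (fun _ => True).

Definition cc k := 1/2 + (1/2)^(S k).
Lemma cc_step k : cc k - (1/2)^(S (S k)) = cc (S k).
Proof. unfold cc. change ((1/2)^(S (S k))) with (1/2 * (1/2)^(S k)). change ((1/2)^(S (S (S k)))) with (1/2 * (1/2 * (1/2)^(S k))). lra. Qed.

Definition St := (E * (nat -> Prop) * nat)%type.
Definition Inv k (s : St) := le zero (fst (fst s)) /\ le (fst (fst s)) u0 /\
  fd (Dg E g) (snd (fst s)) /\ forall m, snd (fst s) m -> g m (fst (fst s)) >= cc k.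
Definition Spec k (s : St) (p : nat * E * St) :=
  le zero (snd (fst p)) /\ le (snd (fst p)) (fst (fst s)) /\
  le (fst (fst (snd p))) (fst (fst s)) /\ meet (snd (fst p)) (fst (fst (snd p))) = zero /\
  g (fst (fst p)) (snd (fst p)) >= cc (S k) /\ (snd s < fst (fst p))%nat /\
  snd (snd p) = fst (fst p) /\ Inv (S k) (snd p).

Lemma step_ex k s : Inv k s -> exists p, Spec k s p.
Proof.
  destruct s as [[w P] b]. intros [I1 [I2 [I3 I4]]]. simpl in *.
  assert (He : 0 < (1/2)^(S (S k))) by (apply pow_lt; lra).
  destruct (step E g Hga Hgp u0 Hu0 w P (cc k) _ b He I1 I2 I3 I4)
    as [n [v [w' [P' [S1 [S2 [S3 [S4 [S5 [S6 [S7 [S8 [S9 S10]]]]]]]]]]]]].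
  rewrite cc_step in S8, S10.
  exists (n, v, (w', P', n)). unfold Spec, Inv; simpl. repeat split; auto.
  apply le_trans with w; auto.
Qed.

Definition nxt k (x : {s | Inv k s}) : {p | Spec k (proj1_sig x) p} :=
  constructive_indefinite_description _ (step_ex k _ (proj2_sig x)).

Lemma init_inv : Inv 0 (u0, (fun _ => True), 0%nat).
Proof.
  unfold Inv; simpl. repeat split; auto using le_refl. intros m _. rewrite Hu0. unfold cc. simpl. lra.
Qed.

Fixpoint chain (k : nat) : {s | Inv k s} :=
  match k with
  | O => exist _ _ init_inv
  | S k' => let p := nxt k' (chain k') in
            exist _ (snd (proj1_sig p)) (proj2 (proj2 (proj2 (proj2 (proj2 (proj2 (proj2 (proj2_sig p))))))))
  end.

Definition NN k := fst (fst (proj1_sig (nxt k (chain k)))).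
Definition VV k := snd (fst (proj1_sig (nxt k (chain k)))).
Definition WW k := fst (fst (proj1_sig (chain k))).

Lemma spec_k k : Spec k (proj1_sig (chain k)) (proj1_sig (nxt k (chain k))).
Proof. exact (proj2_sig (nxt k (chain k))). Qed.

Lemma WW_S k : WW (S k) = fst (fst (snd (proj1_sig (nxt k (chain k))))).
Proof. reflexivity. Qed.

Lemma main_seq : exists (nk : nat -> nat) (v : nat -> E),
  (forall k, (nk k < nk (S k))%nat) /\
  (forall k, le zero (v k) /\ le (v k) u0) /\
  (forall j k, j <> k -> meet (v j) (v k) = zero) /\
  (forall k, g (nk k) (v k) >= 1/2).
Proof.
  exists NN, VV.
  assert (HW0 : forall k, le zero (WW k) /\ le (WW k) u0).
  { intro k. destruct (proj2_sig (chain k)) as [A1 [A2 _]]. split; auto. }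
  assert (HWS : forall k, le (WW (S k)) (WW k)).
  { intro k. rewrite WW_S. apply (spec_k k). }
  assert (HWm : forall j k, (j <= k)%nat -> le (WW k) (WW j)).
  { intros j k H. induction H. apply le_refl. apply le_trans with (WW m); auto. }
  assert (HV : forall k, le zero (VV k) /\ le (VV k) (WW k)).
  { intro k. destruct (spec_k k) as [A1 [A2 _]]. split; auto. }
  assert (HD : forall j k, (j < k)%nat -> meet (VV j) (VV k) = zero).
  { intros j k H. destruct (spec_k j) as [_ [_ [_ [A4 _]]]].
    apply (disj_below E _ (VV j) _ (WW (S j))).
    apply HV. apply le_refl. apply HV.
    apply le_trans with (WW k). apply HV. apply HWm; lia.
    rewrite WW_S. exact A4. }
  split; [|split; [|split]].
  - intro k. destruct (spec_k (S k)) as [_ [_ [_ [_ [_ [A6 _]]]]]].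
    destruct (spec_k k) as [_ [_ [_ [_ [_ [_ [A7 _]]]]]]].
    assert (X : snd (proj1_sig (chain (S k))) = NN k) by exact A7.
    rewrite X in A6. exact A6.
  - intro k. split. apply HV. apply le_trans with (WW k); apply HV || apply HW0.
  - intros j k H. destruct (Nat.lt_gt_cases j k) as [[H1|H1] _]; auto.
    rewrite meet_comm. auto.
  - intro k. destruct (spec_k k) as [_ [_ [_ [_ [A5 _]]]]].
    unfold cc in A5. pose proof (pow_lt (1/2) (S (S k))). unfold NN, VV. lra.
Qed.
End Rec.


Theorem proposition3p7 (E : BanachLattice) (u : nat -> E -> R)
  (hpos : forall n, is_dual_pos (u n))
  (hfd : finitely_disjoint_dual_pos u)
  (u0 : E) (hu0 : le zero u0) (delta : R) (hdelta : delta > 0)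
  (hbound : forall n, u n u0 >= delta) :
  exists (nk : nat -> nat) (v : nat -> E) (eps : R),
    (forall k, (nk k < nk (S k))%nat) /\
    (forall k, le zero (v k) /\ le (v k) u0) /\
    (forall j k, j <> k -> disjointE (v j) (v k)) /\
    eps > 0 /\
    (forall k, u (nk k) (v k) >= eps).
Proof.
  set (g := fun m x => u m x / u m u0).
  assert (Uadd : forall m, Fadd E (u m)).
  { intros m x y. destruct (hpos m) as [[H _] _]. apply H. }
  assert (Upos : forall m, Fpos E (u m)).
  { intros m x Hx. destruct (hpos m) as [_ H]. apply H; auto. }
  assert (Hd : forall m, u m u0 > 0) by (intro m; specialize (hbound m); lra).
  assert (Hga : forall m, Fadd E (g m)).
  { intros m x y. unfold g. rewrite Uadd. specialize (Hd m). field. lra. }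
  assert (Hgp : forall m, Fpos E (g m)).
  { intros m x Hx. unfold g. specialize (Hd m). specialize (Upos m x Hx). unfold Rdiv. apply Rmult_le_pos; auto. left; apply Rinv_0_lt_compat; lra. }
  assert (Hu0 : forall m, g m u0 = 1).
  { intro m. unfold g. specialize (Hd m). field. lra. }
  assert (Htr : forall i j, disjoint_dual_pos (u i) (u j) -> Dg E g i j).
  { intros i j H x Hx eps He.
    destruct (H x Hx (eps * delta)) as [y [Y0 [Y1 Y2]]]. nra.
    exists y. repeat split; auto. unfold g.
    assert (A : 0 <= u i y) by (apply Upos; auto).
    assert (B : 0 <= u j (sub x y)) by (apply Upos; apply le0_sub; auto).
    assert (C1 : u i y / u i u0 <= u i y / delta).
    { unfold Rdiv. apply Rmult_le_compat_l; auto. apply Rinv_le_contravar; auto.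
      specialize (hbound i); lra. }
    assert (C2 : u j (sub x y) / u j u0 <= u j (sub x y) / delta).
    { unfold Rdiv. apply Rmult_le_compat_l; auto. apply Rinv_le_contravar; auto.
      specialize (hbound j); lra. }
    assert (C3 : u i y / delta + u j (sub x y) / delta < eps).
    { replace (u i y / delta + u j (sub x y) / delta) with ((u i y + u j (sub x y)) / delta)
        by (field; lra).
      apply Rmult_lt_reg_r with delta; auto. unfold Rdiv. rewrite Rmult_assoc, Rinv_l; lra. }
    lra. }
  assert (Ffd : fd (Dg E g) (fun _ => True)).
  { intro K. destruct (hfd K) as [i [I1 I2]]. exists (map i (seq 0 K)).
    split; [rewrite length_map, length_seq; lia|]. split; [|split].
    - apply FOP_nodup. apply FOP_map_seq. intros j k _ Hjk Hk.
      specialize (I1 j k Hjk ltac:(lia)). lia.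
    - rewrite Forall_forall; auto.
    - apply FOP_map_seq. intros j k _ Hjk Hk. apply Htr. apply I2; lia. }
  destruct (main_seq E g Hga Hgp u0 Hu0 hu0 Ffd) as [nk [v [M1 [M2 [M3 M4]]]]].
  exists nk, v, (delta / 2). split; [|split; [|split; [|split]]]; auto.
  - intros j k H. unfold disjointE. rewrite !absE_pos; auto; apply M2.
  - lra.
  - intro k. specialize (M4 k). unfold g in M4. specialize (Hd (nk k)). specialize (hbound (nk k)).
    assert (u (nk k) (v k) = u (nk k) (v k) / u (nk k) u0 * u (nk k) u0) by (field; lra).
    nra.
Qed.
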